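(* Let $k\ge 2$, $\epsilon>0$, and let $\mathbf Q\in\mathcal D_{\epsilon,E}$ have output alphabet $\{1,\dots,L\}$. Then for every $j\in\{1,\dots,L\}$, $$\sum_{i=1}^k\frac{q_{ji}^2}{q_j^2}\ \le\ k\Big(1+(e^{\epsilon}-1)^2\frac{d^\ast(k-d^\ast)}{(d^\ast e^{\epsilon}+k-d^\ast)^2}\Big).$$
   Context: A mechanism $\mathbf Q$ with input alphabet $\{1,\dots,k\}$ and finite output alphabet $\{1,\dots,L\}$ is a conditional distribution $\mathbf Q(j\mid i)$; write $q_{ji}=\mathbf Q(j\mid i)$ and $q_j=\frac1k\sum_{i=1}^k q_{ji}$. $\mathcal D_{\epsilon,E}$ is the set of such finite-output mechanisms that are $\epsilon$-locally differentially private ($q_{ji}\le e^{\epsilon}q_{ji'}$ for all $j,i,i'$) and satisfy $q_{ji}/\min_{i'\in[k]}q_{ji'}\in\{1,e^{\epsilon}\}$ for all $j\in[L]$, $i\in[k]$. Let $d^\ast\in\arg\min_{1\le d\le k-1}\frac{(de^{\epsilon}+k-d)^2}{d(k-d)}$ (ties broken arbitrarily). *)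

(* Defs.v *)
(* concrete reals R. Indices are 1-based naturals. *)
From Stdlib Require Import Reals Lra Lia.
Open Scope R_scope.

Fixpoint sum1 (n : nat) (f : nat -> R) : R :=
  match n with
  | O => 0
  | S m => sum1 m f + f n
  end.

Fixpoint min1 (k : nat) (f : nat -> R) : R :=
  match k with
  | O => 0
  | S O => f 1%nat
  | S m => Rmin (min1 m f) (f k)
  end.

(* q j i = Q(j | i): a mechanism with inputs {1..k}, outputs {1..L} *)
Definition is_mechanism (k L : nat) (q : nat -> nat -> R) : Prop :=
  (forall j i, (1 <= j <= L)%nat -> (1 <= i <= k)%nat -> 0 <= q j i) /\
  (forall i, (1 <= i <= k)%nat -> sum1 L (fun j => q j i) = 1).

Definition eps_LDP (k L : nat) (eps : R) (q : nat -> nat -> R) : Prop :=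
  forall j i i', (1 <= j <= L)%nat -> (1 <= i <= k)%nat -> (1 <= i' <= k)%nat ->
    q j i <= exp eps * q j i'.

(* the class D_{eps,E}; the ratio q_ji / min_i' q_ji' must be defined, so
   we require the minimum to be positive *)
Definition in_D_eps_E (k L : nat) (eps : R) (q : nat -> nat -> R) : Prop :=
  is_mechanism k L q /\ eps_LDP k L eps q /\
  forall j i, (1 <= j <= L)%nat -> (1 <= i <= k)%nat ->
    0 < min1 k (q j) /\
    (q j i / min1 k (q j) = 1 \/ q j i / min1 k (q j) = exp eps).

Definition qbar (k : nat) (q : nat -> nat -> R) (j : nat) : R :=
  / INR k * sum1 k (fun i => q j i).

Definition dobj (k : nat) (eps : R) (d : nat) : R :=
  (INR d * exp eps + INR k - INR d) ^ 2 / (INR d * (INR k - INR d)).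

Definition is_dstar (k : nat) (eps : R) (d : nat) : Prop :=
  (1 <= d <= k - 1)%nat /\
  forall d', (1 <= d' <= k - 1)%nat -> dobj k eps d <= dobj k eps d'.

(* Main.v *)
Require Import Defs.
From Stdlib Require Import Reals Lra Lia.
Open Scope R_scope.

Lemma sum1_div n f c : sum1 n (fun i => f i / c) = sum1 n f / c.
Proof. induction n; simpl; [unfold Rdiv; ring| rewrite IHn; unfold Rdiv; ring]. Qed.

Lemma key (K A D E : R) : 0 < K -> 1 < E -> 0 <= A <= K -> 0 < D < K ->
  0 < K + A * (E - 1) -> 0 < D * E + K - D ->
  (0 < A < K -> (D * E + K - D) ^ 2 / (D * (K - D)) <=
                (K + A * (E - 1)) ^ 2 / (A * (K - A))) ->
  K ^ 2 * (K + A * (E ^ 2 - 1)) / (K + A * (E - 1)) ^ 2 <=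
  K * (1 + (E - 1) ^ 2 * (D * (K - D)) / (D * E + K - D) ^ 2).
Proof.
  intros HK HE HA HD HS HT H.
  set (S := K + A * (E - 1)) in *. set (T := D * E + K - D) in *.
  assert (Hg : A * (K - A) / S ^ 2 <= D * (K - D) / T ^ 2).
  { assert (Hh : 0 <= D * (K - D) / T ^ 2).
    { apply Rmult_le_pos; [nra| left; apply Rinv_0_lt_compat; nra]. }
    destruct (Req_dec A 0) as [->|HA0].
    { unfold Rdiv; rewrite Rmult_0_l, Rmult_0_l; exact Hh. }
    destruct (Req_dec A K) as [->|HAK].
    { unfold Rdiv; rewrite Rminus_diag, Rmult_0_r, Rmult_0_l; exact Hh. }
    assert (HAA : 0 < A < K) by lra.
    specialize (H HAA).
    replace (A * (K - A) / S ^ 2) with (/ (S ^ 2 / (A * (K - A)))).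
    2:{ field; split; nra. }
    replace (D * (K - D) / T ^ 2) with (/ (T ^ 2 / (D * (K - D)))).
    2:{ field; split; nra. }
    apply Rinv_le_contravar; [|exact H].
    apply Rdiv_lt_0_compat; nra. }
  replace (K ^ 2 * (K + A * (E ^ 2 - 1)) / S ^ 2)
    with (K * (1 + (E - 1) ^ 2 * (A * (K - A) / S ^ 2))).
  2:{ unfold S; field; unfold S in HS; nra. }
  replace ((E - 1) ^ 2 * (D * (K - D)) / T ^ 2) with ((E - 1) ^ 2 * (D * (K - D) / T ^ 2)).
  2:{ field; nra. }
  apply Rmult_le_compat_l; [lra|].
  apply Rplus_le_compat_l. apply Rmult_le_compat_l; [nra|exact Hg].
Qed.

Lemma count_lemma (k : nat) (f : nat -> R) (m E : R) :
  (forall i, (1 <= i <= k)%nat -> f i = m \/ f i = m * E) ->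
  forall n, (n <= k)%nat -> exists a : nat, (a <= n)%nat /\
    sum1 n f = m * (INR n + INR a * (E - 1)) /\
    sum1 n (fun i => f i ^ 2) = m ^ 2 * (INR n + INR a * (E ^ 2 - 1)).
Proof.
  intros Hf n. induction n as [|n IH]; intros Hn.
  - exists 0%nat; simpl; split; [lia| split; ring].
  - destruct IH as [a [Ha [H1 H2]]]; [lia|].
    change (sum1 (S n) f) with (sum1 n f + f (S n)).
    change (sum1 (S n) (fun i => f i ^ 2)) with (sum1 n (fun i => f i ^ 2) + f (S n) ^ 2).
    rewrite H1, H2. rewrite S_INR.
    destruct (Hf (S n)) as [E1|E1]; [lia| |]; rewrite E1.
    + exists a; split; [lia| split; ring].
    + exists (S a); rewrite S_INR; split; [lia| split; ring].
Qed.

Theorem lemma1 (k L : nat) (eps : R) (q : nat -> nat -> R) (dstar : nat) :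
  (2 <= k)%nat -> 0 < eps -> in_D_eps_E k L eps q -> is_dstar k eps dstar ->
  forall j, (1 <= j <= L)%nat ->
    sum1 k (fun i => q j i ^ 2 / qbar k q j ^ 2) <=
    INR k * (1 + (exp eps - 1) ^ 2 *
      (INR dstar * (INR k - INR dstar)) /
      (INR dstar * exp eps + INR k - INR dstar) ^ 2).
Proof.
  intros Hk Heps [Hmech [Hldp HD]] [Hd Hdmin] j Hj.
  set (m := min1 k (q j)).
  set (E := exp eps).
  assert (HE : 1 < E) by (unfold E; rewrite <- exp_0; apply exp_increasing; lra).
  assert (Hm : 0 < m) by (apply (HD j 1%nat Hj); lia).
  assert (Hf : forall i, (1 <= i <= k)%nat -> q j i = m \/ q j i = m * E).
  { intros i Hi. destruct (HD j i Hj Hi) as [_ [H|H]]; fold m in H.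
    - left. apply (f_equal (fun x => x * m)) in H. unfold Rdiv in H.
      rewrite Rmult_assoc, Rinv_l, Rmult_1_r in H; lra.
    - right. apply (f_equal (fun x => x * m)) in H. unfold Rdiv in H.
      rewrite Rmult_assoc, Rinv_l, Rmult_1_r in H; fold E in H; lra. }
  destruct (count_lemma k (q j) m E Hf k (Nat.le_refl k)) as [a [Ha [H1 H2]]].
  rewrite sum1_div, H2. unfold qbar. change (sum1 k (fun i => q j i)) with (sum1 k (q j)). rewrite H1. fold E.
  assert (HK : 0 < INR k) by (apply lt_0_INR; lia).
  assert (HA : 0 <= INR a <= INR k) by (split; [apply pos_INR| apply le_INR; lia]).
  assert (HDk : 0 < INR dstar < INR k) by (split; [apply lt_0_INR; lia| apply lt_INR; lia]).
  assert (HS : 0 < INR k + INR a * (E - 1)) by nra.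
  assert (HT : 0 < INR dstar * E + INR k - INR dstar) by nra.
  replace (m ^ 2 * (INR k + INR a * (E ^ 2 - 1)) / (/ INR k * (m * (INR k + INR a * (E - 1)))) ^ 2)
    with (INR k ^ 2 * (INR k + INR a * (E ^ 2 - 1)) / (INR k + INR a * (E - 1)) ^ 2).
  2:{ field; repeat split; lra. }
  apply key; try lra.
  intros [Ha1 Ha2].
  assert (Hadm : (1 <= a <= k - 1)%nat).
  { split. - change 0 with (INR 0) in Ha1. apply INR_lt in Ha1. lia. - apply INR_lt in Ha2. lia. }
  specialize (Hdmin a Hadm). unfold dobj in Hdmin. fold E in Hdmin.
  replace (INR k + INR a * (E - 1)) with (INR a * E + INR k - INR a) by ring.
  exact Hdmin.
Qed.
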